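(* Assume $\mathbb E f(\boldsymbol X)=0$ and $p_{\min}>0$. Let $J_1,J_2,\dots\subset\{1,\dots,M\}$ be any sequence of sets with $\#J_l\le2$, and define $R_0^\star\equiv0$, $R_l^\star(\boldsymbol X)=R_{l-1}^\star(\boldsymbol X)+\mathbb E(f(\boldsymbol X)-R_{l-1}^\star(\boldsymbol X)\mid\boldsymbol X_{\mathcal X(J_l)})$. Then for each $l>0$ and every $J\subset\{1,\dots,M\}$ with $\#J\le2$, $$|\mathbb E(f(\boldsymbol X)-R_{l-1}^\star(\boldsymbol X)\mid\boldsymbol X_{\mathcal X(J)})|\le 3\sqrt{\mathbb E[f(\boldsymbol X)^2]}\,p_{\min}^{-1}\quad\text{almost surely},$$ and for each $s>0$, $\iota_s\le 3s\sqrt{\mathbb E[f(\boldsymbol X)^2]}\,p_{\min}^{-1}$, where $\iota_s=\sum_{l=1}^s\max_{\vec c\in\{0,1\}^{\#\mathcal X(J_l)}}|\mathbb E[f(\boldsymbol X)-R_{l-1}^\star(\boldsymbol X)\mid\boldsymbol X_{\mathcal X(J_l)}=\vec c]|$.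
   Context: Setup. $\boldsymbol X=(X_1,\dots,X_p)^\top$ is a random vector in $\{0,1\}^p$; $\{1,\dots,p\}$ is partitioned into disjoint nonempty feature groups $\mathcal X(1),\dots,\mathcal X(M)$, $M\ge 2$; a group is either a single feature or has $\#\mathcal X(m)>1$ and consists of one-hot indicators ($\sum_{j\in\mathcal X(m)}\mathbf 1\{X_j=1\}=1$ a.s.). $\mathcal X(J)=\bigcup_{m\in J}\mathcal X(m)$, $\boldsymbol X_H=(X_j)_{j\in H}$. Convention: $\mathbb E(h(\boldsymbol X)\mid\boldsymbol X_H=\vec c)=0$ when $\mathbb P(\boldsymbol X_H=\vec c)=0$. $p_{\min}=\min_{1\le l<k\le M,\,i\in\mathcal X(l),\,j\in\mathcal X(k),\,(a,b)\in\{0,1\}^2}\mathbb P(X_i=a,X_j=b)$. $f:\{0,1\}^p\to\mathbb R$. *)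

(* Defs.v *)
From HB Require Import structures.
From mathcomp Require Import all_boot all_order all_algebra.
From mathcomp Require Import reals.
Set Implicit Arguments. Unset Strict Implicit. Unset Printing Implicit Defensive.
Import Order.TTheory GRing.Theory Num.Theory.
Local Open Scope ring_scope.

Section Defs.
Variables (R : realType) (p M : nat).
Notation vec := {ffun 'I_p -> bool}.
Variable (P : vec -> R).

Definition is_pmf := (forall x, 0 <= P x) /\ \sum_x P x = 1.

(* g i = index m of the group X(m) containing feature i *)
Variable (g : 'I_p -> 'I_M).

Definition grp (m : 'I_M) : {set 'I_p} := [set i | g i == m].
Definition grpJ (J : {set 'I_M}) : {set 'I_p} := [set i | g i \in J].

(* well-formed feature groups: nonempty, and a group with more than one
   feature consists of one-hot indicators (almost surely) *)
Definition groups_ok :=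
  (forall m : 'I_M, 0 < #|grp m|)%N /\
  (forall m : 'I_M, (1 < #|grp m|)%N ->
     forall x, 0 < P x -> #|[set j in grp m | x j]| = 1%N).

Definition expect (h : vec -> R) : R := \sum_x P x * h x.

(* E(h(X) | X_H = x_H), with value 0 on null events *)
Definition condexp (h : vec -> R) (H : {set 'I_p}) (x : vec) : R :=
  let den := \sum_(y : vec | [forall i in H, y i == x i]) P y in
  if den == 0 then 0
  else (\sum_(y : vec | [forall i in H, y i == x i]) P y * h y) / den.

Definition prob2 (i j : 'I_p) (a b : bool) : R :=
  \sum_(x : vec | (x i == a) && (x j == b)) P x.

Definition pmin : R :=
  \big[Num.min/1]_(i : 'I_p) \big[Num.min/1]_(j : 'I_p | (g i < g j)%N)
    \big[Num.min/1]_(a : bool) \big[Num.min/1]_(b : bool) prob2 i j a b.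

(* R*_l, for the sequence J_1, J_2, ... given by J l (l >= 1; J 0 unused) *)
Fixpoint Rstar (f : vec -> R) (J : nat -> {set 'I_M}) (l : nat) : vec -> R :=
  match l with
  | 0%N => fun _ => 0
  | l'.+1 => fun x => Rstar f J l' x +
      condexp (fun y => f y - Rstar f J l' y) (grpJ (J l)) x
  end.

(* iota_s = sum_{l=1}^s max_c |E[f - R*_{l-1} | X_{X(J_l)} = c]|;
   c ranges over {0,1}^{X(J_l)}, realized as the restrictions of all x *)
Definition iota_sum (f : vec -> R) (J : nat -> {set 'I_M}) (s : nat) : R :=
  \sum_(1 <= l < s.+1)
    \big[Num.max/0]_(x : vec)
       `|condexp (fun y => f y - Rstar f J l.-1 y) (grpJ (J l)) x|.
End Defs.

(* Main.v *)
Require Import Defs.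
From HB Require Import structures.
From mathcomp Require Import all_boot all_order all_algebra.
From mathcomp Require Import reals ring lra.
Set Implicit Arguments. Unset Strict Implicit. Unset Printing Implicit Defensive.
Import Order.TTheory GRing.Theory Num.Theory.
Local Open Scope ring_scope.

Section Aux.
Variables (R : realType) (p : nat).
Notation vec := {ffun 'I_p -> bool}.
Variable P : vec -> R.
Hypothesis P0 : forall x, 0 <= P x.

Definition rl (H : {set 'I_p}) (x y : vec) : bool := [forall i in H, y i == x i].
Definition Dn H x := \sum_(y | rl H x y) P y.
Definition Nm (h : vec -> R) H x := \sum_(y | rl H x y) P y * h y.

Lemma condexpE h H x : condexp P h H x = if Dn H x == 0 then 0 else Nm h H x / Dn H x.
Proof. by []. Qed.

Lemma rl_refl H x : rl H x x.
Proof. by apply/forall_inP. Qed.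

Lemma rl_sym H x y : rl H x y = rl H y x.
Proof.
by apply/forall_inP/forall_inP => Hf i iH; rewrite eq_sym; apply: Hf.
Qed.

Lemma rl_trans H x y : rl H x y -> forall z, rl H x z = rl H y z.
Proof.
move=> /forall_inP Hxy z; apply/forall_inP/forall_inP => Hf i iH.
  by rewrite (eqP (Hf i iH)) (eqP (Hxy i iH)).
by rewrite (eqP (Hf i iH)) (eqP (Hxy i iH)).
Qed.

Lemma Dn_eq H x y : rl H x y -> Dn H x = Dn H y.
Proof. by move=> r; apply: eq_bigl => z; apply: rl_trans. Qed.

Lemma Nm_eq h H x y : rl H x y -> Nm h H x = Nm h H y.
Proof. by move=> r; apply: eq_bigl => z; apply: rl_trans. Qed.

Lemma ce_eq h H x y : rl H x y -> condexp P h H x = condexp P h H y.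
Proof. by move=> r; rewrite !condexpE (Dn_eq r) (Nm_eq h r). Qed.

Lemma Dn_ge0 H x : 0 <= Dn H x.
Proof. by apply: sumr_ge0. Qed.

Lemma Px_le_D H x : P x <= Dn H x.
Proof.
rewrite /Dn (bigD1 x) ?rl_refl //= lerDl; apply: sumr_ge0 => *; exact: P0.
Qed.

Lemma Px0 H x : Dn H x = 0 -> P x = 0.
Proof. by move=> D0; apply/le_anti; rewrite P0 -D0 Px_le_D. Qed.

Lemma split_weight H (F : vec -> R) x :
  P x * F x = \sum_(y | rl H x y) P y * P x * F x / Dn H x.
Proof.
have [D0|Dn0] := eqVneq (Dn H x) 0.
  rewrite (Px0 D0) mul0r big1 // => y _; by rewrite mulr0 !mul0r.
rewrite (eq_bigr (fun y => P y * (P x * F x / Dn H x))); last first.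
  by move=> y _; rewrite !mulrA.
by rewrite -big_distrl /= -/(Dn H x); field.

Qed.

Lemma tower h H :
  \sum_x P x * condexp P h H x * h x = \sum_x P x * condexp P h H x * condexp P h H x.
Proof.
set c := condexp P h H.
transitivity (\sum_x \sum_(y | rl H x y) P y * P x * (c x * h x) / Dn H x).
  by apply: eq_bigr => x _; rewrite -mulrA (split_weight H (fun x => c x * h x)).
transitivity (\sum_x \sum_(y | rl H x y) P x * c x * (P y * h y) / Dn H x); last first.
  apply: eq_bigr => x _.
  have [D0|Dn0] := eqVneq (Dn H x) 0.
    rewrite (Px0 D0) !mul0r big1 // => y _; by rewrite !mul0r.
  rewrite -big_distrl -mulr_sumr /= -/(Nm h H x).
  by rewrite {3}/c condexpE (negPf Dn0) mulrA.
under eq_bigr => x _ do rewrite big_mkcond.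
rewrite exchange_big /=.
apply: eq_bigr => y _; rewrite [RHS]big_mkcond /=; apply: eq_bigr => x _.
rewrite rl_sym; case: ifP => // r.
rewrite /c (ce_eq h r) (Dn_eq r); ring.
Qed.

Lemma contraction h H :
  \sum_x P x * (h x - condexp P h H x) ^+ 2 <= \sum_x P x * h x ^+ 2.
Proof.
set c := condexp P h H.
rewrite (eq_bigr (fun x => P x * h x ^+ 2 + 2 * (P x * c x * c x - P x * c x * h x) - P x * c x ^+ 2)); last first.
  by move=> x _; rewrite /c; ring.
rewrite sumrB big_split /= -mulr_sumr sumrB tower subrr mulr0 addr0 lerBlDr lerDl.
apply: sumr_ge0 => x _; apply: mulr_ge0 => //; exact: sqr_ge0.
Qed.

Lemma CS (A : pred vec) (h : vec -> R) : 0 < \sum_(y | A y) P y ->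
  (\sum_(y | A y) P y * h y) ^+ 2 <= (\sum_(y | A y) P y) * \sum_(y | A y) P y * h y ^+ 2.
Proof.
set S := \sum_(y | A y) P y; set T := \sum_(y | A y) P y * h y;
  set U := \sum_(y | A y) P y * h y ^+ 2 => S0.
have : 0 <= \sum_(y | A y) P y * (S * h y - T) ^+ 2.
  apply: sumr_ge0 => y _; apply: mulr_ge0 => //; exact: sqr_ge0.
rewrite (eq_bigr (fun y => S ^+ 2 * (P y * h y ^+ 2) - (2 * S * T) * (P y * h y) + T ^+ 2 * P y)); last first.
  by move=> y _; ring.
rewrite big_split sumrB /= -!mulr_sumr -/S -/T -/U.
have -> : S ^+ 2 * U - 2 * S * T * T + T ^+ 2 * S = S * (S * U - T ^+ 2) by ring.
by rewrite pmulr_rge0 // subr_ge0.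
Qed.

End Aux.

Section Main.
Variables (R : realType) (p M : nat).
Notation vec := {ffun 'I_p -> bool}.
Variables (P : vec -> R) (g : 'I_p -> 'I_M).
Hypothesis P0 : forall x, 0 <= P x.
Hypothesis Gok : groups_ok P g.
Hypothesis pmin_gt0 : 0 < pmin P g.
Hypothesis M2 : (2 <= M)%N.

Lemma bigmin_le (I : eqType) (r : seq I) (Q : pred I) (F : I -> R) (i0 : I) (z : R) :
  i0 \in r -> Q i0 -> \big[Num.min/z]_(i <- r | Q i) F i <= F i0.
Proof.
elim: r => // a r IH; rewrite inE big_cons => /orP [/eqP<-|ir] Qi.
  by rewrite Qi ge_min lexx.
case: ifP => _; last exact: IH.
by rewrite ge_min IH ?orbT.
Qed.

Lemma pmin_le i j a b : (g i < g j)%N -> pmin P g <= prob2 P i j a b.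
Proof.
move=> gij; rewrite /pmin.
apply: le_trans (bigmin_le (fun i => \big[Num.min/1]_(j : 'I_p | (g i < g j)%N)
    \big[Num.min/1]_(a : bool) \big[Num.min/1]_(b : bool) prob2 P i j a b) 1
    (mem_index_enum i) isT) _.
apply: le_trans (bigmin_le (fun j => \big[Num.min/1]_(a : bool) \big[Num.min/1]_(b : bool) prob2 P i j a b) 1
    (mem_index_enum j) gij) _.
apply: le_trans (bigmin_le (fun a => \big[Num.min/1]_(b : bool) prob2 P i j a b) 1
    (mem_index_enum a) isT) _.
exact: (bigmin_le (fun b => prob2 P i j a b) 1 (mem_index_enum b) isT).
Qed.

Lemma pmin_le1 : pmin P g <= 1.
Proof.
rewrite /pmin; apply: (big_rec (fun v => v <= 1)) => // i v _ v1.
by rewrite ge_min v1 orbT.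
Qed.

Lemma prob2C i j a b : prob2 P i j a b = prob2 P j i b a.
Proof. by apply: eq_bigl => x; rewrite andbC. Qed.

Lemma sum_mono (A B : pred vec) : (forall y, 0 < P y -> B y -> A y) ->
  \sum_(y | B y) P y <= \sum_(y | A y) P y.
Proof.
move=> BA; rewrite [X in X <= _]big_mkcond [X in _ <= X]big_mkcond /=.
apply: ler_sum => y _; case: ifP => By; last by case: ifP.
have [Py|] := ltP 0 (P y); first by rewrite BA.
by move=> Py0; case: ifP => _ //; rewrite (le_anti (andP (conj Py0 (P0 y)))).
Qed.

Lemma rep x : 0 < P x -> forall m : 'I_M, exists i, g i = m /\ forall y : vec, 0 < P y -> y i = x i -> forall j : 'I_p, g j = m -> y j = x j.
Proof.
move=> Px m; case: Gok => G1 G2.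
case: (ltnP 1 #|grp g m|) => hc.
  have /eqP/cards1P [i0 Hi0] := G2 m hc x Px.
  have : i0 \in [set j in grp g m | x j] by rewrite Hi0 set11.
  rewrite inE => /andP [i0m xi0]; exists i0; split; first by move: i0m; rewrite inE => /eqP.
  move=> y Py yi j gj.
  have /eqP/cards1P [k Hk] := G2 m hc y Py.
  have : i0 \in [set j in grp g m | y j] by rewrite inE i0m yi xi0.
  rewrite Hk inE => /eqP ki0.
  have jm : j \in grp g m by rewrite inE gj.
  case xj: (x j); case yj: (y j) => //.
    have : j \in [set j in grp g m | x j] by rewrite inE jm xj.
    by rewrite Hi0 inE => /eqP ji0; move: yj; rewrite ji0 yi xi0.
  have : j \in [set j in grp g m | y j] by rewrite inE jm yj.
  by rewrite Hk inE => /eqP jk; move: xj; rewrite jk -ki0 xi0.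
have /cards1P [i0 Hi0] : #|grp g m| == 1%N by rewrite eqn_leq hc G1.
have : i0 \in grp g m by rewrite Hi0 set11.
rewrite inE => /eqP gi0; exists i0; split => // y Py yi j gj.
have : j \in grp g m by rewrite inE gj.
by rewrite Hi0 inE => /eqP ->.
Qed.

Lemma Dn_pair x m k : 0 < P x -> m != k -> pmin P g <= Dn P (grpJ g [set m; k]) x.
Proof.
move=> Px mk.
have [i [gi Hi]] := rep Px m; have [j [gj Hj]] := rep Px k.
have : pmin P g <= prob2 P i j (x i) (x j).
  case: (ltngtP (g i) (g j)) => c; first exact: pmin_le.
    by rewrite prob2C; exact: pmin_le.
  by move: mk; rewrite -gi -gj; move/eqP: (val_inj c) => ->.
move/le_trans; apply; apply: sum_mono => y Py /andP [/eqP yi /eqP yj].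
apply/forall_inP => t; rewrite inE !inE => /orP [] /eqP gt; apply/eqP.
  exact: Hi.
exact: Hj.
Qed.

Lemma Dn_anti x (J1 J2 : {set 'I_M}) : J1 \subset J2 ->
  Dn P (grpJ g J2) x <= Dn P (grpJ g J1) x.
Proof.
move=> sJ; apply: sum_mono => y _ /forall_inP H; apply/forall_inP => t.
rewrite inE => tJ; apply: H; rewrite inE; exact: (subsetP sJ).
Qed.

Lemma extend (J' : {set 'I_M}) : (#|J'| <= 2)%N ->
  exists m k, m != k /\ J' \subset [set m; k].
Proof.
move=> cJ.
have o0M : (0 < M)%N by apply: leq_trans M2.
pose o0 : 'I_M := Ordinal o0M; pose o1 : 'I_M := Ordinal M2.
have o01 : o0 != o1 by [].
case: (set_0Vmem J') => [->|[m mJ]]; first by exists o0, o1; rewrite sub0set.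
case: (set_0Vmem (J' :\ m)) => [E|[k kJ]].
  exists m, (if m == o0 then o1 else o0); split.
    by case: (eqVneq m o0) => [->|mo].
  apply/subsetP => t tJ; case: (eqVneq t m) => [->|tm]; first by rewrite !inE eqxx.
  have : t \in J' :\ m by rewrite !inE tm tJ.
  by rewrite E inE.
exists m, k; split; first by move: kJ; rewrite !inE eq_sym => /andP [].
apply/subsetP => t tJ; case: (eqVneq t m) => [->|tm]; first by rewrite !inE eqxx.
case: (eqVneq t k) => [->|tk]; first by rewrite !inE eqxx orbT.
have c1 : (#|J' :\ m| <= 1)%N by move: cJ; rewrite (cardsD1 m) mJ.
have : ([set t; k] \subset J' :\ m) by apply/subsetP => u; rewrite !inE => /orP [] /eqP ->; [by rewrite tm tJ | by move: kJ; rewrite !inE].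
move/subset_leq_card; rewrite cards2 tk => c2; by have := leq_trans c2 c1.
Qed.

Lemma Dn_lb x (J' : {set 'I_M}) : (#|J'| <= 2)%N -> 0 < Dn P (grpJ g J') x ->
  pmin P g <= Dn P (grpJ g J') x.
Proof.
move=> cJ Dpos.
case: (boolP [exists y, rl (grpJ g J') x y && (0 < P y)]) => [/existsP [y /andP [r Py]]|nE].
  rewrite (Dn_eq P r).
  have [m [k [mk sJ]]] := extend cJ.
  have h1 := Dn_pair Py mk. have h2 := Dn_anti y sJ. exact: le_trans h1 h2.
suff : Dn P (grpJ g J') x = 0 by move=> D0; move: Dpos; rewrite D0 ltxx.
apply: big1 => y r; apply/le_anti; rewrite P0 andbT leNgt.
by apply/negP => Py; move/negP: nE; apply; apply/existsP; exists y; rewrite r Py.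
Qed.

Lemma ce_bound (h : vec -> R) (E : R) (J' : {set 'I_M}) x : (#|J'| <= 2)%N ->
  expect P (fun y => h y ^+ 2) <= E ->
  `|condexp P h (grpJ g J') x| <= Num.sqrt E / pmin P g.
Proof.
move=> cJ hE.
have E0 : 0 <= E.
  by apply: le_trans hE; apply: sumr_ge0 => y _; apply: mulr_ge0 => //; exact: sqr_ge0.
have B0 : 0 <= Num.sqrt E / pmin P g by rewrite divr_ge0 ?sqrtr_ge0 ?ltW.
rewrite condexpE; case: ifPn => [_|D0]; first by rewrite normr0.
set D := Dn P (grpJ g J') x; set N := Nm P h (grpJ g J') x.
have Dpos : 0 < D by rewrite lt_def D0 Dn_ge0.
have Dlb : pmin P g <= D := Dn_lb cJ Dpos.
have CSi := CS P0 h Dpos.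
have U_le : \sum_(y | rl (grpJ g J') x y) P y * h y ^+ 2 <= E.
  apply: le_trans hE; rewrite /expect [X in _ <= X](bigID (rl (grpJ g J') x)) /= lerDl.
  by apply: sumr_ge0 => y _; apply: mulr_ge0 => //; exact: sqr_ge0.
have N2 : N ^+ 2 <= D * E := le_trans CSi (ler_wpM2l (ltW Dpos) U_le).
rewrite -[`|N / D|]sqrtr_sqr -[Num.sqrt E / _]ger0_norm // -sqrtr_sqr ler_sqrt ?sqr_ge0 //.
rewrite !expr_div_n sqr_sqrtr // ler_pdivrMr ?exprn_gt0 // mulrAC ler_pdivlMr ?exprn_gt0 //.
have pm1 := pmin_le1.
apply: le_trans (ler_wpM2r (sqr_ge0 _) N2) _.
have pm2 : pmin P g ^+ 2 <= D.
  apply: le_trans Dlb; rewrite expr2 -[X in _ <= X]mulr1.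
  rewrite mulr1; have pg := pmin_gt0; nra.
have -> : E * D ^+ 2 = D * E * D by ring.
apply: ler_wpM2l => //; exact: mulr_ge0 (ltW Dpos) E0.
Qed.

Lemma resid f (J : nat -> {set 'I_M}) l :
  expect P (fun y => (f y - Rstar P g f J l y) ^+ 2) <= expect P (fun y => f y ^+ 2).
Proof.
elim: l => [|l IH]; first by apply: ler_sum => y _; rewrite /= subr0.
apply: le_trans IH; rewrite /expect /=.
under eq_bigr => y _ do rewrite opprD addrA.
exact: (contraction P0 (fun y => f y - Rstar P g f J l y) (grpJ g (J l.+1))).
Qed.

End Main.

Theorem lemma2 (R : realType) (p M : nat) (P : {ffun 'I_p -> bool} -> R)
  (g : 'I_p -> 'I_M) (f : {ffun 'I_p -> bool} -> R) (J : nat -> {set 'I_M}) :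
  (2 <= M)%N ->
  is_pmf P ->
  groups_ok P g ->
  expect P f = 0 ->
  0 < pmin P g ->
  (forall l, (0 < l)%N -> (#|J l| <= 2)%N) ->
  (forall l, (0 < l)%N -> forall J' : {set 'I_M}, (#|J'| <= 2)%N ->
     forall x, 0 < P x ->
       `|condexp P (fun y => f y - Rstar P g f J l.-1 y) (grpJ g J') x|
         <= 3 * Num.sqrt (expect P (fun y => f y ^+ 2)) / pmin P g)
  /\
  (forall s, (0 < s)%N ->
     iota_sum P g f J s <= 3 * s%:R * Num.sqrt (expect P (fun y => f y ^+ 2)) / pmin P g).
Proof.
move=> M2 [P0 _] Gok _ pm HJ.
set E := expect P (fun y => f y ^+ 2).
have B0 : 0 <= Num.sqrt E / pmin P g by rewrite divr_ge0 ?sqrtr_ge0 ?ltW.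
have key : forall l, (0 < l)%N -> forall J' : {set 'I_M}, (#|J'| <= 2)%N -> forall x,
    `|condexp P (fun y => f y - Rstar P g f J l.-1 y) (grpJ g J') x| <= Num.sqrt E / pmin P g.
  by move=> l _ J' cJ x; apply: ce_bound => //; exact: resid.
split.
  move=> l l0 J' cJ x _; apply: le_trans (key l l0 J' cJ x) _.
  by rewrite -mulrA; lra.
move=> s s0; rewrite /iota_sum.
apply: le_trans (_ : \sum_(1 <= l < s.+1) (Num.sqrt E / pmin P g) <= _).
  rewrite big_nat [X in _ <= X]big_nat; apply: ler_sum => l /andP [l0 _].
  apply: (big_ind (fun v => v <= Num.sqrt E / pmin P g)) => //.
    by move=> u v u1 v1; rewrite ge_max u1 v1.
  by move=> x _; apply: key => //; apply: HJ.
rewrite sumr_const_nat subn1 /= -mulr_natl -!mulrA.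
set t := Num.sqrt E * _.
have : 0 <= s%:R * t by apply: mulr_ge0.
lra.
Qed.
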